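(* Let $F$ be an algebraically closed field and $R$ an $F$-algebra. Let $\sigma$ be an $F$-algebra automorphism of $R$ and $\delta$ a $\sigma$-derivation of $R$, and set $T=R[x;\sigma,\delta]$. Let $\Xi(T)$ (resp. $\Xi(R)$) be the set of ideals $M$ of $T$ (resp. of $R$) with $T/M\cong F$ (resp. $R/M\cong F$), and let $\Psi:\Xi(T)\to\Xi(R)$, $M\mapsto M\cap R$. Consider for $\mathfrak m\in\Xi(R)$ the conditions (a) $\delta([R,R])\subseteq\mathfrak m$; (b) $\sigma(\mathfrak m)=\mathfrak m$ and $\delta(\mathfrak m)\subseteq\mathfrak m$; (c) $\sigma(\mathfrak m)\neq\mathfrak m$. (i) If $M\in\Xi(T)$ and $\mathfrak m=\Psi(M)$, then (a) holds for $\mathfrak m$, and either (b) or (c) holds for $\mathfrak m$. (ii) If $\mathfrak m\in\Xi(R)$ satisfies (b) (and hence (a)), then $\mathfrak mT$ is an ideal of $T$ with $T/\mathfrak mT\cong F[x]$, so that $\Psi^{-1}(\mathfrak m)=\{\langle\mathfrak mT,x-\lambda\rangle:\lambda\in F\}\cong\mathbb A^1_F$. (iii) If $\mathfrak m\in\Xi(R)$ satisfies (a) and (c), then there is a unique $M\in\Xi(T)$ with $\Psi(M)=\mathfrak m$.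
   Context: $[R,R]$ denotes the set of commutators $ab-ba$, $a,b\in R$. A $\sigma$-derivation $\delta$ is an $F$-linear map with $\delta(ab)=\delta(a)b+\sigma(a)\delta(b)$, and $R[x;\sigma,\delta]$ is the algebra generated by $R$ and $x$ subject to $xr-\sigma(r)x=\delta(r)$ for $r\in R$. *)

(* Defs.v *)
From HB Require Import structures.
From mathcomp Require Import all_boot all_order all_algebra.
Set Implicit Arguments. Unset Strict Implicit. Unset Printing Implicit Defensive.
Import GRing.Theory.
Local Open Scope ring_scope.

Definition alg_hom (F : fieldType) (A B : lalgType F) (f : A -> B) : Prop :=
  (forall a b, f (a + b) = f a + f b) /\
  (forall (k : F) a, f (k *: a) = k *: f a) /\
  (forall a b, f (a * b) = f a * f b) /\
  f 1 = 1.

Definition is_ideal (A : pzRingType) (I : A -> Prop) : Prop :=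
  I 0 /\ (forall a b, I a -> I b -> I (a + b)) /\
  (forall a b, I b -> I (a * b)) /\ (forall a b, I a -> I (a * b)).

Definition set_eq (A : Type) (P Q : A -> Prop) : Prop := forall a, P a <-> Q a.

(* Xi(A): ideals M of the F-algebra A with A/M isomorphic to F as F-algebras,
   i.e. (first isomorphism theorem) M is the kernel of a (necessarily
   surjective) F-algebra homomorphism A -> F. *)
Definition Xi (F : fieldType) (A : lalgType F) (M : A -> Prop) : Prop :=
  exists phi : A -> F^o, alg_hom phi /\ set_eq M (fun a => phi a = 0).

Definition sigma_derivation (F : fieldType) (R : lalgType F) (s d : R -> R) :=
  (forall (k : F) a b, d (k *: a + b) = k *: d a + d b) /\
  (forall a b, d (a * b) = d a * b + s a * d b).

Definition alg_aut (F : fieldType) (R : lalgType F) (s : R -> R) :=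
  alg_hom s /\ bijective s.

Definition ore_sum (F : fieldType) (R T : lalgType F) (iota : R -> T) (x : T)
  (c : seq R) : T := \sum_(i < size c) iota c`_i * x ^+ i.

(* (T, iota, x) is the Ore extension R[x; s, d]: iota : R -> T is an F-algebra
   map, x iota(r) - iota(s r) x = iota(d r), and the powers of x form a basis
   of T as a left R-module (every element is uniquely sum_i iota(r_i) x^i). *)
Definition is_ore_ext (F : fieldType) (R T : lalgType F) (s d : R -> R)
  (iota : R -> T) (x : T) : Prop :=
  alg_hom iota /\
  (forall r, x * iota r - iota (s r) * x = iota (d r)) /\
  (forall t, exists c : seq R, t = ore_sum iota x c) /\
  (forall c : seq R, ore_sum iota x c = 0 -> forall i, c`_i = 0).

Definition Psi (F : fieldType) (R T : lalgType F) (iota : R -> T) (M : T -> Prop)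
  : R -> Prop := fun r => M (iota r).

Definition cond_a (F : fieldType) (R : lalgType F) (d : R -> R) (m : R -> Prop) :=
  forall a b, m (d (a * b - b * a)).

Definition img (A : Type) (f : A -> A) (m : A -> Prop) : A -> Prop :=
  fun y => exists r, m r /\ y = f r.

Definition cond_b (F : fieldType) (R : lalgType F) (s d : R -> R) (m : R -> Prop) :=
  set_eq (img s m) m /\ (forall r, m r -> m (d r)).

Definition cond_c (F : fieldType) (R : lalgType F) (s : R -> R) (m : R -> Prop) :=
  ~ set_eq (img s m) m.

Definition ext_right (F : fieldType) (R T : lalgType F) (iota : R -> T)
  (m : R -> Prop) : T -> Prop :=
  fun t => exists n (a : 'I_n -> R) (b : 'I_n -> T),
    (forall i, m (a i)) /\ t = \sum_(i < n) iota (a i) * b i.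

Definition ideal_gen (A : pzRingType) (S : A -> Prop) : A -> Prop :=
  fun t => forall I, is_ideal I -> (forall s, S s -> I s) -> I t.

Definition fiber_ideal (F : fieldType) (R T : lalgType F) (iota : R -> T)
  (x : T) (m : R -> Prop) (lam : F) : T -> Prop :=
  ideal_gen (fun t => ext_right iota m t \/ t = x - lam%:A).

(* Main.v *)
Require Import Defs.
From HB Require Import structures.
From mathcomp Require Import all_boot all_order all_algebra.
From mathcomp Require Import ring.
From Stdlib Require Import Classical ClassicalEpsilon.
Set Implicit Arguments. Unset Strict Implicit. Unset Printing Implicit Defensive.
Import GRing.Theory.
Local Open Scope ring_scope.
Section Gen.
Variable F : fieldType.

Section Hom.
Variables (A B : lalgType F) (f : A -> B).
Hypothesis Hf : alg_hom f.

Lemma ahD a b : f (a + b) = f a + f b. Proof. by case: Hf. Qed.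
Lemma ahZ k a : f (k *: a) = k *: f a. Proof. by case: Hf => _ []. Qed.
Lemma ahM a b : f (a * b) = f a * f b. Proof. by case: Hf => _ [] _ []. Qed.
Lemma ah1 : f 1 = 1. Proof. by case: Hf => _ [] _ []. Qed.
Lemma ah0 : f 0 = 0.
Proof. by apply: (addrI (f 0)); rewrite -ahD !addr0. Qed.
Lemma ahN a : f (- a) = - f a.
Proof. by apply: (addrI (f a)); rewrite -ahD !subrr ah0. Qed.
Lemma ahB a b : f (a - b) = f a - f b.
Proof. by rewrite ahD ahN. Qed.
Lemma ahX a n : f (a ^+ n) = f a ^+ n.
Proof. by elim: n => [|n IH]; rewrite ?expr0 ?ah1 // !exprS ahM IH. Qed.
Lemma ah_sum n (g : 'I_n -> A) : f (\sum_(i < n) g i) = \sum_(i < n) f (g i).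
Proof.
elim: n g => [|n IH] g; first by rewrite !big_ord0 ah0.
by rewrite !big_ord_recr /= ahD IH.
Qed.
Lemma ahS1 k : f (k *: 1) = k *: 1.
Proof. by rewrite ahZ ah1. Qed.
End Hom.

Lemma ah_comp (A B C : lalgType F) (f : A -> B) (g : B -> C) :
  alg_hom f -> alg_hom g -> alg_hom (fun a => g (f a)).
Proof.
move=> Hf Hg; split; [|split; [|split]] => *.
- by rewrite (ahD Hf) (ahD Hg).
- by rewrite (ahZ Hf) (ahZ Hg).
- by rewrite (ahM Hf) (ahM Hg).
- by rewrite (ah1 Hf) (ah1 Hg).
Qed.

Lemma ore_sum_pad (A B : lalgType F) (g : A -> B) (y : B) (c : seq A) N :
  g 0 = 0 -> (size c <= N)%N ->
  ore_sum g y c = \sum_(i < N) g c`_i * y ^+ i.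
Proof.
move=> g0 hN; rewrite /ore_sum (big_ord_widen N (fun i => g c`_i * y ^+ i) hN).
rewrite big_mkcond; apply: eq_bigr => i _; case: ifP => // /negbT.
by rewrite -leqNgt => hi; rewrite nth_default // g0 mul0r.
Qed.

Lemma ore_sum_hom (A B C : lalgType F) (f : B -> C) (g : A -> B) (y : B) c :
  alg_hom f -> f (ore_sum g y c) = ore_sum (fun a => f (g a)) (f y) c.
Proof.
move=> Hf; rewrite /ore_sum (ah_sum Hf); apply: eq_bigr => i _.
by rewrite (ahM Hf) (ahX Hf).
Qed.

Lemma ore_sum1 (A B : lalgType F) (g : A -> B) (y : B) r :
  ore_sum g y [:: r] = g r.
Proof. by rewrite /ore_sum big_ord1 /= expr0 mulr1. Qed.

Lemma ore_sumX (A B : lalgType F) (g : A -> B) (y : B) :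
  alg_hom g -> ore_sum g y [:: 0; 1] = y.
Proof.
move=> Hg; rewrite /ore_sum /= big_ord_recr big_ord1 /= (ah0 Hg) (ah1 Hg).
by rewrite mul0r add0r mul1r expr1.
Qed.

Lemma ore_sum_add (A B : lalgType F) (g : A -> B) (y : B) a b :
  alg_hom g -> ore_sum g y a + ore_sum g y b =
  ore_sum g y (mkseq (fun i => a`_i + b`_i) (maxn (size a) (size b))).
Proof.
move=> Hg; have g0 := ah0 Hg.
rewrite (ore_sum_pad _ g0 (leq_maxl (size a) (size b))).
rewrite (ore_sum_pad _ g0 (leq_maxr (size a) (size b))).
rewrite /ore_sum size_mkseq -big_split; apply: eq_bigr => i _ /=.
by rewrite nth_mkseq // (ahD Hg) mulrDl.
Qed.

Lemma ore_sum_lmul (A B : lalgType F) (g : A -> B) (y : B) r c :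
  alg_hom g -> g r * ore_sum g y c = ore_sum g y (map (fun a => r * a) c).
Proof.
move=> Hg; rewrite /ore_sum size_map mulr_sumr; apply: eq_bigr => i _.
by rewrite (nth_map 0) // (ahM Hg) mulrA.
Qed.

Lemma ore_sum_xmul (A B : lalgType F) (g : A -> B) (y : B) (s d : A -> A) c :
  alg_hom g -> (forall r, y * g r = g (s r) * y + g (d r)) ->
  y * ore_sum g y c = ore_sum g y (0 :: map s c) + ore_sum g y (map d c).
Proof.
move=> Hg Hy; rewrite /ore_sum /= !size_map big_ord_recl /= (ah0 Hg) mul0r add0r.
rewrite mulr_sumr -big_split; apply: eq_bigr => i _ /=.
rewrite /bump /= ?add0n ?add1n !(nth_map 0) // mulrA Hy mulrDl exprS mulrA.
by [].
Qed.

End Gen.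

Section Univ.
Variables (F : fieldType) (R T B : lalgType F) (s d : R -> R) (iota : R -> T)
  (x : T) (psi : R -> B) (y : B).
Hypotheses (Hi : alg_hom iota)
  (Hrel : forall r, x * iota r - iota (s r) * x = iota (d r))
  (Hspan : forall t, exists c : seq R, t = ore_sum iota x c)
  (Hind : forall c : seq R, ore_sum iota x c = 0 -> forall i, c`_i = 0)
  (Hpsi : alg_hom psi) (Hy : forall r, y * psi r = psi (s r) * y + psi (d r)).

Lemma uniq_coef c c' : ore_sum iota x c = ore_sum iota x c' -> forall i, c`_i = c'`_i.
Proof.
move=> E i; set N := maxn (size c) (size c').
have hc : (size c <= N)%N by apply: leq_maxl.
have hc' : (size c' <= N)%N by apply: leq_maxr.
pose e := mkseq (fun i => c`_i - c'`_i) N.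
have He : ore_sum iota x e = 0.
  transitivity (ore_sum iota x c - ore_sum iota x c'); last by rewrite E subrr.
  rewrite (ore_sum_pad _ (ah0 Hi) hc) (ore_sum_pad _ (ah0 Hi) hc') -sumrB.
  rewrite /ore_sum size_mkseq; apply: eq_bigr => j _.
  by rewrite nth_mkseq // (ahB Hi) mulrBl.
have := Hind He i; case: (ltnP i N) => hi.
  by rewrite nth_mkseq // => /eqP; rewrite subr_eq0 => /eqP.
by move=> _; rewrite !nth_default ?(leq_trans hc hi) ?(leq_trans hc' hi).
Qed.

Lemma Hx r : x * iota r = iota (s r) * x + iota (d r).
Proof. by rewrite -Hrel addrC subrK. Qed.

Definition Phi (t : T) : B :=
  ore_sum psi y (proj1_sig (constructive_indefinite_description _ (Hspan t))).

Lemma Phi_ore c : Phi (ore_sum iota x c) = ore_sum psi y c.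
Proof.
rewrite /Phi; case: constructive_indefinite_description => c' /= Ec'.
have H := uniq_coef Ec'.
rewrite (ore_sum_pad _ (ah0 Hpsi) (leq_maxl (size c) (size c'))).
rewrite (ore_sum_pad _ (ah0 Hpsi) (leq_maxr (size c) (size c'))).
by apply: eq_bigr => i _; rewrite H.
Qed.

Lemma Phi_add t u : Phi (t + u) = Phi t + Phi u.
Proof.
have [a ->] := Hspan t; have [b ->] := Hspan u.
by rewrite (ore_sum_add _ _ _ Hi) !Phi_ore (ore_sum_add _ _ _ Hpsi).
Qed.

Lemma Phi0 : Phi 0 = 0.
Proof. by apply: (addrI (Phi 0)); rewrite -Phi_add !addr0. Qed.

Lemma Phi1 : Phi 1 = 1.
Proof. by rewrite -(ah1 Hi) -(ore_sum1 iota x) Phi_ore ore_sum1 (ah1 Hpsi). Qed.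

Lemma Phi_lmul r u : Phi (iota r * u) = psi r * Phi u.
Proof.
have [c ->] := Hspan u.
by rewrite (ore_sum_lmul _ _ _ Hi) !Phi_ore (ore_sum_lmul _ _ _ Hpsi).
Qed.

Lemma Phi_xmul u : Phi (x * u) = y * Phi u.
Proof.
have [c ->] := Hspan u.
by rewrite (ore_sum_xmul _ Hi Hx) Phi_add !Phi_ore (ore_sum_xmul _ Hpsi Hy).
Qed.

Definition good t := forall u, Phi (t * u) = Phi t * Phi u.

Lemma good_all t : good t.
Proof.
have gD a b : good a -> good b -> good (a + b).
  by move=> ga gb u; rewrite mulrDl !Phi_add ga gb mulrDl.
have gM a b : good a -> good b -> good (a * b).
  by move=> ga gb u; rewrite -mulrA ga gb ga mulrA.
have g0 : good 0 by move=> u; rewrite mul0r Phi0 mul0r.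
have gi r : good (iota r).
  by move=> u; rewrite Phi_lmul -[iota r]mulr1 Phi_lmul Phi1 mulr1.
have gx : good x.
  by move=> u; rewrite Phi_xmul -[x]mulr1 Phi_xmul Phi1 mulr1.
have gX n : good (x ^+ n).
  elim: n => [|n IH]; first by move=> u; rewrite expr0 mul1r Phi1 mul1r.
  by rewrite exprS; apply: gM.
have [c ->] := Hspan t.
rewrite /ore_sum; apply: (big_ind good) => // i _; exact: gM.
Qed.

Lemma Phi_hom : alg_hom Phi.
Proof.
split; [exact: Phi_add|split; [|split; [exact: good_all|exact: Phi1]]].
move=> k a.
have -> : k *: a = iota (k *: 1) * a by rewrite (ahS1 Hi) -scalerAl mul1r.
by rewrite Phi_lmul (ahS1 Hpsi) -scalerAl mul1r.
Qed.

Lemma Phi_iota r : Phi (iota r) = psi r.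
Proof. by rewrite -(ore_sum1 iota x) Phi_ore ore_sum1. Qed.

Lemma Phi_x : Phi x = y.
Proof. by rewrite -{1}(ore_sumX x Hi) Phi_ore ore_sumX. Qed.

End Univ.

Lemma univ (F : fieldType) (R T B : lalgType F) (s d : R -> R) (iota : R -> T)
  (x : T) (psi : R -> B) (y : B) :
  alg_hom iota ->
  (forall r, x * iota r - iota (s r) * x = iota (d r)) ->
  (forall t, exists c : seq R, t = ore_sum iota x c) ->
  (forall c : seq R, ore_sum iota x c = 0 -> forall i, c`_i = 0) ->
  alg_hom psi -> (forall r, y * psi r = psi (s r) * y + psi (d r)) ->
  exists Phi : T -> B, alg_hom Phi /\
    (forall c, Phi (ore_sum iota x c) = ore_sum psi y c) /\
    (forall r, Phi (iota r) = psi r) /\ Phi x = y.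
Proof.
move=> Hi Hrel Hspan Hind Hpsi Hy.
exists (Phi psi y Hspan); split; first exact: Phi_hom.
split; first exact: Phi_ore.
split; [exact: Phi_iota|exact: Phi_x].
Qed.

Section Chi.
Variables (F : fieldType).

Lemma scale1o (k : F) : k *: (1 : F^o) = k.
Proof. by rewrite /GRing.scale /= mulr1. Qed.

Lemma chi_sub (R : lalgType F) (chi : R -> F^o) r :
  alg_hom chi -> chi (r - (chi r) *: 1) = 0.
Proof. by move=> H; rewrite (ahB H) (ahS1 H) scale1o subrr. Qed.

Lemma chi_eq (R : lalgType F) (c1 c2 : R -> F^o) :
  alg_hom c1 -> alg_hom c2 -> (forall r, c1 r = 0 <-> c2 r = 0) ->
  forall r, c1 r = c2 r.
Proof.
move=> H1 H2 E r.
have := chi_sub r H1; move/E; rewrite (ahB H2) (ahS1 H2) scale1o.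
by move/eqP; rewrite subr_eq0 => /eqP.
Qed.

Lemma ker_ideal (A : lalgType F) (B : comAlgType F) (f : A -> B) :
  alg_hom f -> is_ideal (fun t => f t = 0).
Proof.
move=> H; split; first exact: ah0.
split; first by move=> a b ha hb; rewrite (ahD H) ha hb addr0.
split; first by move=> a b hb; rewrite (ahM H) hb mulr0.
by move=> a b ha; rewrite (ahM H) ha mul0r.
Qed.

Lemma ideal_eq (A : pzRingType) (P Q : A -> Prop) :
  set_eq P Q -> is_ideal Q -> is_ideal P.
Proof.
move=> E [h0 [hD [hl hr]]]; split; first by apply/E.
split; first by move=> a b /E ha /E hb; apply/E; apply: hD.
split; first by move=> a b /E hb; apply/E; apply: hl.
by move=> a b /E ha; apply/E; apply: hr.
Qed.

Lemma polyC_hom : alg_hom (fun k : F^o => (k : F)%:P : {poly F}).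
Proof.
split; [by move=> a b; rewrite polyCD|split; [|split]].
- by move=> k a; rewrite -scale_polyC.
- by move=> a b; rewrite polyCM.
- by [].
Qed.

Lemma ev_hom (lam : F) : alg_hom (fun p : {poly F} => (p.[lam] : F^o)).
Proof.
split; [by move=> a b; rewrite hornerD|split; [|split]].
- by move=> k a; rewrite hornerZ.
- by move=> a b; rewrite hornerM.
- by rewrite -[1]polyC1 hornerC.
Qed.

Variables (R : lalgType F) (s d : R -> R).
Hypotheses (Hs : alg_hom s) (Hd : sigma_derivation s d).

Lemma dD a b : d (a + b) = d a + d b.
Proof. by case: Hd => HL _; have := HL 1 a b; rewrite !scale1r. Qed.
Lemma d0 : d 0 = 0.
Proof. by apply: (addrI (d 0)); rewrite -dD !addr0. Qed.
Lemma dZ k a : d (k *: a) = k *: d a.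
Proof. by case: Hd => HL _; have := HL k a 0; rewrite !addr0 d0 addr0. Qed.
Lemma dN a : d (- a) = - d a.
Proof. by apply: (addrI (d a)); rewrite -dD !subrr d0. Qed.
Lemma dB a b : d (a - b) = d a - d b.
Proof. by rewrite dD dN. Qed.
Lemma dM a b : d (a * b) = d a * b + s a * d b.
Proof. by case: Hd. Qed.
Lemma d1 : d 1 = 0.
Proof.
have h := dM 1 1; rewrite !mulr1 (ah1 Hs) mul1r in h.
by apply: (addrI (d 1)); rewrite addr0 -h.
Qed.
End Chi.
Lemma part1 (F : fieldType) (R T : lalgType F) (s d : R -> R) (iota : R -> T) (x : T) :
  alg_hom s -> is_ore_ext s d iota x ->
  forall M : T -> Prop, Xi M ->
     cond_a d (Psi iota M) /\
     (cond_b s d (Psi iota M) \/ cond_c s (Psi iota M)).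
Proof.
move=> Hs [Hi [Hrel _]] M [Ph [HPh HM]].
have Hc := ah_comp Hi HPh.
have Hr r : Ph x * Ph (iota r) - Ph (iota (s r)) * Ph x = Ph (iota (d r)).
  by rewrite -Hrel (ahB HPh) !(ahM HPh).
have HP r : Psi iota M r <-> Ph (iota r) = 0 by apply: HM.
split.
  move=> a b; apply/HP; rewrite -Hr (ahB Hs) !(ahM Hs) !(ahB Hc) !(ahM Hc).
  rewrite [Ph (iota a) * _]mulrC [Ph (iota (s a)) * _]mulrC !subrr.
  by rewrite mulr0 mul0r subrr.
case: (classic (set_eq (img s (Psi iota M)) (Psi iota M))) => H; last by right.
left; split => // r /HP Hr0; apply/HP.
have /HP Hs0 : Psi iota M (s r) by apply/H; exists r; split => //; apply/HP.
by rewrite -Hr Hr0 Hs0 mulr0 mul0r subrr.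
Qed.

Lemma part3 (F : fieldType) (R T : lalgType F) (s d : R -> R) (iota : R -> T) (x : T) :
  alg_aut s -> sigma_derivation s d -> is_ore_ext s d iota x ->
  (forall m : R -> Prop, Xi m -> cond_a d m -> cond_c s m ->
     exists M : T -> Prop, (Xi M /\ set_eq (Psi iota M) m) /\
       forall M' : T -> Prop, Xi M' -> set_eq (Psi iota M') m -> set_eq M' M).
Proof.
move=> [Hs [g Hsg Hgs]] Hd [Hi [Hrel [Hspan Hind]]] m [chi [Hchi Hm]] Ha Hc.
have Hcs := ah_comp Hs Hchi.
have [b0 Hb0] : exists b0, chi b0 != chi (s b0).
  case: (classic (exists b0, chi b0 != chi (s b0))) => // Hn; exfalso.
  have E b : chi b = chi (s b).
    by case: (eqVneq (chi b) (chi (s b))) => // H; exfalso; apply: Hn; exists b.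
  apply: Hc => r; split.
    by move=> [r' [/Hm Hr' ->]]; apply/Hm; rewrite -E.
  move=> /Hm Hr; exists (g r); split; last by rewrite Hgs.
  by apply/Hm; rewrite E Hgs.
pose del := chi b0 - chi (s b0).
have hdel : del != 0 by rewrite subr_eq0.
have key a b : chi (d a) * (chi b - chi (s b)) = chi (d b) * (chi a - chi (s a)).
  have := Ha a b; move/Hm; rewrite (dB Hd) !(dM Hd) !(ahB Hchi) !(ahD Hchi).
  rewrite !(ahM Hchi) => H0.
  apply/eqP; rewrite -subr_eq0; apply/eqP; rewrite -H0; ring.
pose lam := chi (d b0) / del.
have Hdl r : chi (d r) = lam * (chi r - chi (s r)).
  by rewrite /lam mulrAC -key mulfK.
have [Phi [HPhi [Hore [Hio Hx]]]] := univ Hi Hrel Hspan Hind Hchi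
  (y := lam) (s := s) (d := d) (fun r => ltac:(rewrite Hdl; ring)).
exists (fun t => Phi t = 0); split.
  split; first by exists Phi.
  by move=> r; rewrite /Psi Hio; split => /Hm.
move=> M' [Ps [HPs HM']] HP.
have Hc' := ah_comp Hi HPs.
have Ech r : Ps (iota r) = chi r.
  apply: (chi_eq Hc' Hchi) => r'; rewrite -HM'; split => [/HP/Hm //|/Hm/HP //].
have Hrel' r : Ps x * chi r - chi (s r) * Ps x = chi (d r).
  by rewrite -!Ech -Hrel (ahB HPs) !(ahM HPs).
have Emu : Ps x = lam.
  have := Hrel' b0; rewrite Hdl => /eqP; rewrite -subr_eq0.
  have -> : Ps x * chi b0 - chi (s b0) * Ps x - lam * (chi b0 - chi (s b0))
     = (Ps x - lam) * del by rewrite /del; ring.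
  by rewrite mulf_eq0 (negbTE hdel) orbF subr_eq0 => /eqP.
have EPs t : Ps t = Phi t.
  have [c ->] := Hspan t; rewrite (ore_sum_hom _ _ _ HPs) Hore Emu.
  by rewrite /ore_sum; apply: eq_bigr => i _; rewrite Ech.
by move=> t; rewrite HM' EPs.
Qed.

Lemma part2 (F : fieldType) (R T : lalgType F) (s d : R -> R) (iota : R -> T) (x : T) :
  alg_aut s -> sigma_derivation s d -> is_ore_ext s d iota x ->
  (forall m : R -> Prop, Xi m -> cond_b s d m ->
     cond_a d m /\
     is_ideal (ext_right iota m) /\
     (exists phi : T -> {poly F}, alg_hom phi /\
        (forall p, exists t, phi t = p) /\
        set_eq (ext_right iota m) (fun t => phi t = 0)) /\
     (forall M : T -> Prop,
        (Xi M /\ set_eq (Psi iota M) m) <->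
        (exists lam : F, set_eq M (fiber_ideal iota x m lam))) /\
     (forall lam mu : F,
        set_eq (fiber_ideal iota x m lam) (fiber_ideal iota x m mu) -> lam = mu)).
Proof.
move=> [Hs [g Hsg Hgs]] Hd [Hi [Hrel [Hspan Hind]]] m [chi [Hchi Hm]] [Hb1 Hb2].
have Hcs := ah_comp Hs Hchi.
have chis r : chi (s r) = chi r.
  apply: (chi_eq Hcs Hchi) => r'; split.
    move=> /Hm /Hb1 [r'' [Hr'' E]]; apply/Hm.
    by rewrite -(Hsg r') E Hsg.
  by move=> /Hm Hr'; apply/Hm/Hb1; exists r'.
have chid r : chi (d r) = 0.
  have -> : r = (chi r) *: 1 + (r - (chi r) *: 1) by rewrite addrC subrK.
  rewrite (dD Hd) (dZ Hd) (d1 Hs Hd) scaler0 add0r.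
  by apply/Hm/Hb2/Hm; exact: chi_sub.
have Ha : cond_a d m by move=> a b; apply/Hm.
split; first exact: Ha.
have Hpsi := ah_comp Hchi (@polyC_hom F).
have HyX r : 'X * (chi r : F)%:P = (chi (s r) : F)%:P * 'X + (chi (d r) : F)%:P.
  by rewrite chis chid polyC0 addr0 mulrC.
have [Phi [HPhi [Hore [Hio Hx]]]] := univ Hi Hrel Hspan Hind Hpsi HyX.
have Pore c : Phi (ore_sum iota x c) = \poly_(i < size c) (chi c`_i : F).
  by rewrite Hore poly_def /ore_sum; apply: eq_bigr => i _; rewrite mul_polyC.
have Hker : set_eq (ext_right iota m) (fun t => Phi t = 0).
  move=> t; split.
    move=> [n [a [b [Ha' ->]]]]; rewrite (ah_sum HPhi) big1 // => i _.
    by rewrite (ahM HPhi) Hio; have /Hm -> := Ha' i; rewrite polyC0 mul0r.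
  have [c ->] := Hspan t; rewrite Pore => H0.
  exists (size c), (fun i : 'I_(size c) => c`_i), (fun i : 'I_(size c) => x ^+ i).
  split => // i; apply/Hm.
  by have := congr1 (fun p : {poly F} => p`_i) H0; rewrite coef_poly ltn_ord coef0.
have Hsurj p : exists t, Phi t = p.
  exists (ore_sum iota x (map (fun k => k *: (1 : R)) p)); rewrite Pore size_map.
  rewrite -[RHS]coefK; apply: eq_poly => i hi.
  by rewrite (nth_map 0) // (ahS1 Hchi) scale1o.
split; first exact: ideal_eq Hker (ker_ideal HPhi).
split; first by exists Phi.
pose Pl (lam : F) (t : T) : F^o := (Phi t).[lam].
have HPl lam : alg_hom (Pl lam) by exact: ah_comp HPhi (ev_hom lam).
have Pl_xl lam mu : Pl mu (x - lam%:A) = mu - lam.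
  by rewrite /Pl (ahB HPhi) Hx (ahS1 HPhi) alg_polyC hornerD hornerN hornerX hornerC.
have fib lam : set_eq (fiber_ideal iota x m lam) (fun t => Pl lam t = 0).
  move=> t; split.
    move=> Ht; apply: (Ht (fun t => Pl lam t = 0)); first exact: (ker_ideal (HPl lam)).
    move=> u [/Hker Hu|->]; first by rewrite /Pl Hu horner0.
    by rewrite Pl_xl subrr.
  move=> Ht I HI HS.
  have /factor_theorem [q Hq] : root (Phi t) lam by apply/eqP.
  have [u Hu] := Hsurj q.
  have -> : t = (t - u * (x - lam%:A)) + u * (x - lam%:A) by rewrite subrK.
  case: HI => _ [HD [Hl _]]; apply: HD; last by apply: Hl; apply: HS; right.
  apply: HS; left; apply/Hker.
  by rewrite (ahB HPhi) (ahM HPhi) Hu Hq (ahB HPhi) Hx (ahS1 HPhi) alg_polyC subrr.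
have Plio lam r : Pl lam (iota r) = chi r by rewrite /Pl Hio hornerC.
split.
  move=> M; split.
    move=> [[Ps [HPs HM]] HP].
    have Hc' := ah_comp Hi HPs.
    have Ech r : Ps (iota r) = chi r.
      apply: (chi_eq Hc' Hchi) => r'; rewrite -HM; split => [/HP/Hm //|/Hm/HP //].
    exists (Ps x) => t; rewrite HM fib.
    have [c ->] := Hspan t; rewrite (ore_sum_hom _ _ _ HPs) /Pl Pore horner_poly.
    have -> : ore_sum (fun a : R => Ps (iota a)) (Ps x) c =
       \sum_(i < size c) (chi c`_i : F) * (Ps x) ^+ i.
      by rewrite /ore_sum; apply: eq_bigr => i _; rewrite Ech.
    by [].
  move=> [lam Hlam]; split.
    by exists (Pl lam); split => // t; rewrite Hlam fib.
  by move=> r; rewrite /Psi Hlam fib Plio; split => /Hm.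
move=> lam mu E.
have : fiber_ideal iota x m lam (x - lam%:A) by apply/fib; rewrite Pl_xl subrr.
move/E/fib; rewrite Pl_xl => /eqP; rewrite subr_eq0 => /eqP //.
Qed.

Theorem theorem4p2 (F : closedFieldType) (R T : algType F)
  (s d : R -> R) (iota : R -> T) (x : T) :
  alg_aut s -> sigma_derivation s d -> is_ore_ext s d iota x ->
  (* (i) *)
  (forall M : T -> Prop, Xi M ->
     cond_a d (Psi iota M) /\
     (cond_b s d (Psi iota M) \/ cond_c s (Psi iota M))) /\
  (* (ii) *)
  (forall m : R -> Prop, Xi m -> cond_b s d m ->
     cond_a d m /\
     is_ideal (ext_right iota m) /\
     (exists phi : T -> {poly F}, alg_hom phi /\
        (forall p, exists t, phi t = p) /\
        set_eq (ext_right iota m) (fun t => phi t = 0)) /\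
     (forall M : T -> Prop,
        (Xi M /\ set_eq (Psi iota M) m) <->
        (exists lam : F, set_eq M (fiber_ideal iota x m lam))) /\
     (forall lam mu : F,
        set_eq (fiber_ideal iota x m lam) (fiber_ideal iota x m mu) -> lam = mu)) /\
  (* (iii) *)
  (forall m : R -> Prop, Xi m -> cond_a d m -> cond_c s m ->
     exists M : T -> Prop, (Xi M /\ set_eq (Psi iota M) m) /\
       forall M' : T -> Prop, Xi M' -> set_eq (Psi iota M') m -> set_eq M' M).
Proof.
move=> Hs Hd Ho; split; first exact: (part1 (proj1 Hs) Ho).
split; [exact: (part2 Hs Hd Ho)|exact: (part3 Hs Hd Ho)].
Qed.
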